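(* Let $s$ be an aperiodic standard episturmian word over a finite alphabet $A$, and let $s=U_1U_2\cdots U_n\cdots$ be a factorization of $s$ where each $U_i$ ($i\ge1$) is a non-empty prefix of $s$. Then there exist indices $i\neq j$ such that $U_i$ and $U_j$ end in different letters.
   Context: An infinite word $s$ over a finite alphabet $A$ is standard episturmian if its set of factors is closed under reversal (if $u$ is a factor so is its reversal) and every left special factor of $s$ is a prefix of $s$; here a factor $u$ is left special if there are distinct letters $x,y\in A$ with $xu$ and $yu$ both factors of $s$. Aperiodic means not ultimately periodic. *)

(* Defs.v *)
From mathcomp Require Import all_boot.
Set Implicit Arguments. Unset Strict Implicit. Unset Printing Implicit Defensive.

Definition subword (A : Type) (s : nat -> A) (i n : nat) : seq A :=
  mkseq (fun k => s (i + k)) n.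

Definition factor (A : Type) (s : nat -> A) (u : seq A) : Prop :=
  exists i, u = subword s i (size u).

Definition is_prefix (A : Type) (s : nat -> A) (u : seq A) : Prop :=
  u = subword s 0 (size u).

Definition closed_under_reversal (A : Type) (s : nat -> A) : Prop :=
  forall u, factor s u -> factor s (rev u).

Definition left_special (A : Type) (s : nat -> A) (u : seq A) : Prop :=
  exists x y : A, x <> y /\ factor s (x :: u) /\ factor s (y :: u).

Definition standard_episturmian (A : Type) (s : nat -> A) : Prop :=
  closed_under_reversal s /\ (forall u, left_special s u -> is_prefix s u).

Definition ultimately_periodic (A : Type) (s : nat -> A) : Prop :=
  exists p n0, 0 < p /\ forall n, n0 <= n -> s (n + p) = s n.

Definition aperiodic (A : Type) (s : nat -> A) : Prop := ~ ultimately_periodic s.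

Definition start_pos (A : Type) (U : nat -> seq A) (n : nat) : nat :=
  \sum_(i < n) size (U i).

(* s = U_0 U_1 U_2 ... (infinite concatenation; all U_i are assumed nonempty
   separately, so the blocks cover every position). *)
Definition is_factorization (A : Type) (s : nat -> A) (U : nat -> seq A) : Prop :=
  forall n j (x0 : A), j < size (U n) -> s (start_pos U n + j) = nth x0 (U n) j.

(* Main.v *)
Require Import Defs.
From mathcomp Require Import all_boot.
From mathcomp Require Import zify.
From Stdlib Require Import Classical.

Set Implicit Arguments. Unset Strict Implicit. Unset Printing Implicit Defensive.

Lemma nth_subword (A : Type) (x0 : A) (s : nat -> A) i n k :
  k < n -> nth x0 (subword s i n) k = s (i + k).
Proof. by move=> hk; rewrite /subword nth_mkseq. Qed.

Lemma size_subword (A : Type) (s : nat -> A) i n : size (subword s i n) = n.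
Proof. by rewrite /subword size_mkseq. Qed.

(* a right special prefix (via a mismatch) is a palindrome *)
Lemma rs_pal (A : finType) (s : nat -> A) r l :
  standard_episturmian s ->
  s (r + l) <> s l -> (forall k, k < l -> s (r + k) = s k) ->
  forall k, k < l -> s k = s (l - k.+1).
Proof.
move=> [Hrev Hls] Hne Hag.
set u := rev (subword s 0 l).
have f1 : factor s (s l :: u).
  have : factor s (rev (subword s 0 l.+1)) by apply: Hrev; exists 0; rewrite size_subword.
  by rewrite /subword mkseqS rev_rcons.
have e : subword s r l = subword s 0 l.
  apply: (@eq_from_nth _ (s 0)); rewrite !size_subword // => k hk.
  by rewrite !nth_subword // add0n Hag.
have f2 : factor s (s (r + l) :: u).
  have : factor s (rev (subword s r l.+1)) by apply: Hrev; exists r; rewrite size_subword.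
  by rewrite /subword mkseqS rev_rcons -/(subword s r l) e.
have Hp : is_prefix s u by apply: Hls; exists (s l), (s (r + l)); split => //; move=> h; apply: Hne; rewrite h.
move=> k hk.
have szu : size u = l by rewrite size_rev size_subword.
have := congr1 (nth (s 0) ^~ k) Hp.
rewrite szu nth_subword // /u nth_rev ?size_subword // nth_subword ?size_subword; last by lia.
by rewrite add0n => ->.
Qed.

Lemma recur (A : finType) (s : nat -> A) m :
  closed_under_reversal s -> exists r, 0 < r /\ forall k, k < m -> s (r + k) = s k.
Proof.
move=> Hrev.
have [i Hi] : factor s (rev (subword s 0 m)) by apply: Hrev; exists 0; rewrite size_subword.
rewrite size_rev size_subword in Hi.
set N := i + m + 1.
have [j Hj] : factor s (rev (subword s 0 N)) by apply: Hrev; exists 0; rewrite size_subword.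
rewrite size_rev size_subword in Hj.
exists j.+1; split => // k hk.
have h1 := congr1 (nth (s 0) ^~ k.+1) Hj.
rewrite nth_rev ?size_subword in h1; last by rewrite /N; lia.
rewrite !nth_subword ?size_subword in h1; try (rewrite /N; lia).
have h2 := congr1 (nth (s 0) ^~ (m - k.+1)) Hi.
rewrite nth_rev ?size_subword in h2; last by lia.
rewrite !nth_subword ?size_subword in h2; try lia.
have -> : j.+1 + k = j + k.+1 by lia.
rewrite -h1 add0n.
have -> : N - k.+2 = i + (m - k.+1) by rewrite /N; lia.
by rewrite -h2 add0n; congr (s _); lia.
Qed.

Lemma lcp_ex (A : finType) (s : nat -> A) r :
  aperiodic s -> 0 < r ->
  exists l, s (r + l) <> s l /\ forall k, k < l -> s (r + k) = s k.
Proof.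
move=> Hap hr.
have ex : exists l, s (r + l) != s l.
  apply: NNPP => H; apply: Hap; exists r, 0; split => // n _.
  apply/eqP; apply/negPn/negP => Hn; apply: H; exists n; by rewrite addnC.
case: (ex_minnP ex) => l Hl Hmin.
exists l; split; first by apply/eqP.
move=> k hk; apply/eqP; apply/negPn/negP => Hk.
by have := Hmin k Hk; lia.
Qed.

Lemma core (A : finType) (s : nat -> A) (B : nat -> nat) (a : A) r l i :
  (forall k, k < l -> s k = s (l - k.+1)) ->
  (forall k, k < l -> s (r + k) = s k) ->
  (forall j, j < B i.+1 - B i -> s (B i + j) = s j) ->
  s (B i).-1 = a ->
  r < B i -> B i <= r + l -> r + l < B i.+1 -> s (r + l) = a.
Proof.
move=> Hpal Hag F1 F2 h1 h2 h3.
have -> : r + l = B i + (r + l - B i) by lia.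
rewrite F1; last by lia.
rewrite Hpal; last by lia.
rewrite -Hag; last by lia.
by rewrite -F2; congr (s _); lia.
Qed.

Theorem mainTheorem9 (A : finType) (s : nat -> A) (U : nat -> seq A) :
  standard_episturmian s -> aperiodic s ->
  (forall i, U i <> [::]) ->
  (forall i, is_prefix s (U i)) ->
  is_factorization s U ->
  exists i j (u v : seq A) (a b : A),
    i <> j /\ U i = rcons u a /\ U j = rcons v b /\ a <> b.
Proof.
move=> Hse Hap Hne Hpre Hfac.
apply: NNPP => Hcon.
have lastex : forall l : seq A, l <> [::] ->
    exists u b, l = rcons u b /\ nth (s 0) l (size l).-1 = b.
  move=> l; case: (lastP l) => // u b _; exists u, b; split => //.
  by rewrite nth_rcons size_rcons /= ltnn eqxx.
set a := nth (s 0) (U 0) (size (U 0)).-1.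
have Hlast : forall i, nth (s 0) (U i) (size (U i)).-1 = a.
  move=> i; case: (eqVneq i 0) => [-> //|hi].
  have [u [b [Hu Hb]]] := lastex _ (Hne i).
  have [v [c [Hv Hc]]] := lastex _ (Hne 0).
  rewrite Hb /a Hc; apply: NNPP => hbc; apply: Hcon.
  exists i, 0, u, v, b, c; split; first by apply/eqP.
  by split.
set B := start_pos U.
have BS : forall i, B i.+1 = B i + size (U i).
  by move=> i; rewrite /B /start_pos big_ord_recr.
have B0 : B 0 = 0 by rewrite /B /start_pos big_ord0.
have Lpos : forall i, 0 < size (U i).
  by move=> i; case: (U i) (Hne i) => //.
have F1 : forall i j, j < size (U i) -> s (B i + j) = s j.
  move=> i j hj; rewrite (Hfac i j (s 0) hj) (Hpre i) nth_subword //.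
have F2 : forall i, s (B i.+1).-1 = a.
  move=> i; have hp := Lpos i.
  rewrite BS -(Hlast i) -(Hfac i _ (s 0)); last by lia.
  by congr (s _); rewrite /B; lia.
have monoS : forall i k, B i + k <= B (i + k).
  move=> i; elim => [|k IH]; first by rewrite !addn0.
  have -> : i + k.+1 = (i + k).+1 by lia.
  by rewrite BS; have := Lpos (i + k); lia.
have mono : forall i j, i < j -> B i < B j.
  move=> i j hij; have := monoS i (j - i); have -> : i + (j - i) = j by lia.
  lia.
have blk : forall n, exists i, B i <= n < B i.+1.
  move=> n.
  have ex : exists k, n < B k by exists n.+1; have := monoS 0 n.+1; rewrite B0 add0n; lia.
  case: (ex_minnP ex) => k Hk Hmin.
  case: k Hk Hmin => [|k] Hk Hmin; first by rewrite B0 in Hk.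
  exists k; rewrite Hk andbT; case: leqP => // hlt.
  by have := Hmin k hlt; lia.
set m := size (U 0).
have B1 : B 1 = m by rewrite BS B0.
have LL : forall r l i, 0 < r -> s (r + l) <> s l -> (forall k, k < l -> s (r + k) = s k) ->
    r < B i -> B i <= r + l -> r + l < B i.+1 -> l < m.
  move=> r l i hr Hne' Hag h1 h2 h3.
  rewrite ltnNge; apply/negP => hlm.
  have Hpal := rs_pal Hse Hne' Hag.
  have F2' : s (B i).-1 = a.
    by case: i h1 h2 h3 => [|i] h1 h2 h3; [rewrite B0 in h1|apply: F2].
  have e1 := @core _ s B a r l i Hpal Hag (fun j hj => F1 i j ltac:(rewrite BS in hj; lia)) F2' h1 h2 h3.
  have [i' /andP [h1' h2']] := blk l.
  have hi' : 0 < i'.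
    case: i' h1' h2' => // _; rewrite B1 => h; lia.
  have F2'' : s (B i').-1 = a by case: i' h1' h2' hi' => // i' *; apply: F2.
  have hB : 0 < B i' by have := mono 0 i' hi'; rewrite B0.
  have e2 := @core _ s B a 0 l i' Hpal (fun k _ => erefl)
     (fun j hj => F1 i' j ltac:(rewrite BS in hj; lia)) F2'' hB ltac:(by []) h2'.
  by apply: Hne'; rewrite e1 -e2.
have S1 : forall j l, 0 < j -> s (B j + l) <> s l -> (forall k, k < l -> s (B j + k) = s k) -> l < m.
  move=> j l hj Hne' Hag.
  have hBj : 0 < B j by have := mono 0 j hj; rewrite B0.
  have [i /andP [h1 h2]] := blk (B j + l).
  apply: (LL _ _ i hBj Hne' Hag) => //.
  rewrite ltnNge; apply/negP => hle.
  have hij : j <= i.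
    rewrite leqNgt; apply/negP => hji.
    have := monoS i.+1 (j - i.+1).
    have -> : i.+1 + (j - i.+1) = j by lia.
    lia.
  have hji : i <= j.
    rewrite leqNgt; apply/negP => hij'.
    have := mono _ _ hij'; lia.
  have eij : i = j by lia.
  subst i.
  apply: Hne'; apply: F1; rewrite BS in h2; lia.
have [r [hr Hr]] := recur m (proj1 Hse).
have [l [Hne' Hag]] := lcp_ex Hap hr.
have hml : m <= l.
  rewrite leqNgt; apply/negP => hlm; apply: Hne'; exact: Hr.
have [i /andP [h1 h2]] := blk (r + l).
case: (ltnP r (B i)) => hri.
  by have := LL r l i hr Hne' Hag hri h1 h2; lia.
case: i h1 h2 hri => [|i] h1 h2 hri.
  by rewrite B1 in h2; lia.
have hB : 0 < B i.+1 by have := mono 0 i.+1 (ltn0Sn _); rewrite B0.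
have [l' [Hne2 Hag2]] := lcp_ex Hap hB.
have := S1 i.+1 l' (ltn0Sn _) Hne2 Hag2.
have : r + l - B i.+1 < l'.
  rewrite ltnNge; apply/negP => hle.
  apply: Hne2; apply: F1; rewrite BS in h2; lia.
lia.
Qed.
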